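(* Let $G$ be a compact Lie group acting linearly and unitarily on $\mathbb{C}^n$ with moment map $\mu:\mathbb{C}^n\to\mathfrak{g}^*$, let $\alpha\in\mathfrak{g}^*$ be central, and let $\mathfrak{M}=(\mu_{\mathbb{R}}^{-1}(\alpha)\cap\mu_{\mathbb{C}}^{-1}(0))/G$ with the function $\Phi:\mathfrak{M}\to\mathbb{R}$, $\Phi[z,w]=\tfrac12|w|^2$. If $\mu$ is proper, then $\Phi$ is proper.
   Context: $T^*\mathbb{C}^n=\mathbb{C}^n\times(\mathbb{C}^n)^*$ with points $(z,w)$; $G$ acts on it by the induced action, with real moment map $\mu_{\mathbb{R}}(z,w)=\mu(z)-\mu(w)\in\mathfrak{g}^*$ and complex moment map $\mu_{\mathbb{C}}(z,w)(v)=w(\hat v_z)$ for $v\in\mathfrak{g}_{\mathbb{C}}$, $\hat v_z$ the induced tangent vector at $z$. $[z,w]$ denotes the $G$-orbit of $(z,w)$. The function $\Phi$ is the moment map for the circle action $\tau\cdot[z,w]=[z,\tau w]$, $\tau\in S^1$. *)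

(* Defs.v *)
From HB Require Import structures.
From mathcomp Require Import all_boot all_order all_algebra.
From mathcomp Require Import all_classical all_reals all_analysis.
From mathcomp Require Import complex.
Set Implicit Arguments. Unset Strict Implicit. Unset Printing Implicit Defensive.
Import Order.TTheory GRing.Theory Num.Theory.
Import numFieldTopology.Exports numFieldNormedType.Exports.
Local Open Scope classical_set_scope.
Local Open Scope ring_scope.
Local Open Scope complex_scope.

Definition Cplx (R : realType) : numClosedFieldType := R[i].

Section HyperKahlerDefs.
Variables (R : realType) (n : nat).

Local Notation C := (Cplx R).
(* C^n as column vectors, (C^n)^* as row vectors, complex n x n matrices *)
Local Notation Vec := ('cV[C]_n).
Local Notation Cov := ('rV[C]_n).
Local Notation Mat := ('M[C]_n).

Definition adjmx (p q : nat) (A : 'M[C]_(p, q)) : 'M[C]_(q, p) :=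
  (map_mx (fun x : C => Num.conj x) A)^T.

Definition expm (A : Mat) : Mat :=
  limn (series (fun k : nat => ((k`!)%:R : C)^-1 *: A ^+ k)).

Definition unitary_mx (g : Mat) : Prop := adjmx g *m g = 1%:M.

(* G is a compact subgroup of U(n) (the image of the unitary representation) *)
Definition compact_unitary_group (G : set Mat) : Prop :=
  [/\ G 1%:M,
      (forall g h, G g -> G h -> G (g *m h)),
      (forall g, G g -> G (invmx g)),
      (forall g, G g -> unitary_mx g) & compact G].

Definition lie_alg (G : set Mat) : set Mat :=
  [set X | forall t : R, G (expm ((t%:C) *: X))].

Definition lie_type (G : set Mat) := {X : Mat | lie_alg G X}.

(* standard (homogeneous quadratic) moment map mu : C^n -> g^*,
   mu(z)(X) = (i/2) z^* X z  (real for X skew-Hermitian) *)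
Definition mom (z : Vec) (X : Mat) : R :=
  complex.Re ((('i : R[i]) / 2%:R) * (adjmx z *m X *m z) 0 0 : R[i]).

Definition mom_g (G : set Mat) (z : Vec) : {ptws lie_type G -> R} :=
  fun X => mom z (sval X).

(* mu is proper as a map C^n -> g^*  (g^* carrying the topology of pointwise
   evaluation on g, which is the usual one; g^* is closed in R^g) *)
Definition mom_proper (G : set Mat) : Prop :=
  forall K : set {ptws lie_type G -> R}, compact K -> compact (@mom_g G @^-1` K).

Definition lie_dual (G : set Mat) (alpha : Mat -> R) : Prop :=
  forall (t : R) X Y, lie_alg G X -> lie_alg G Y ->
    alpha ((t%:C) *: X + Y) = t * alpha X + alpha Y.

Definition central (G : set Mat) (alpha : Mat -> R) : Prop :=
  forall g X, G g -> lie_alg G X -> alpha (g *m X *m invmx g) = alpha X.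

(* real and complex moment maps on T^*C^n = C^n x (C^n)^* *)
Definition momR (p : Vec * Cov) (X : Mat) : R := mom p.1 X - mom (adjmx p.2) X.
Definition momC (p : Vec * Cov) (X : Mat) : C := (p.2 *m (X *m p.1)) 0 0.

(* mu_R^{-1}(alpha) ∩ mu_C^{-1}(0) ; mu_C vanishes on g_C iff it vanishes on g
   by complex linearity *)
Definition level (G : set Mat) (alpha : Mat -> R) : set (Vec * Cov) :=
  [set p | (forall X, lie_alg G X -> momR p X = alpha X) /\
           (forall X, lie_alg G X -> momC p X = 0)].

Definition act (g : Mat) (p : Vec * Cov) : Vec * Cov := (g *m p.1, p.2 *m invmx g).

Definition orbit (G : set Mat) (p : Vec * Cov) : set (Vec * Cov) :=
  [set act g p | g in G].

(* the hyperkahler quotient M, as the set of G-orbits [z,w] in the level set *)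
Definition hkq (G : set Mat) (alpha : Mat -> R) : set (set (Vec * Cov)) :=
  [set O | exists2 p, level G alpha p & O = orbit G p].

(* quotient topology on M: U open iff its preimage in the level set
   is open in the subspace topology *)
Definition hkq_open (G : set Mat) (alpha : Mat -> R)
    (U : set (set (Vec * Cov))) : Prop :=
  U `<=` hkq G alpha /\
  exists V : set (Vec * Cov), open V /\
    [set p | level G alpha p /\ U (orbit G p)] = V `&` level G alpha.

Definition hkq_compact (G : set Mat) (alpha : Mat -> R)
    (S : set (set (Vec * Cov))) : Prop :=
  S `<=` hkq G alpha /\
  forall (I : Type) (F : I -> set (set (Vec * Cov))),
    (forall i, hkq_open G alpha (F i)) -> S `<=` \bigcup_i F i ->
    exists2 J : set I, finite_set J & S `<=` \bigcup_(i in J) F i.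

Definition sqnorm_cov (w : Cov) : R := complex.Re ((w *m adjmx w) 0 0 : R[i]).

(* Phi[z,w] = |w|^2 / 2, evaluated at a chosen representative of the orbit *)
Definition Phi (O : set (Vec * Cov)) : R :=
  sqnorm_cov (xget (0, 0) O).2 / 2%:R.

Definition Phi_proper (G : set Mat) (alpha : Mat -> R) : Prop :=
  forall K : set R, compact K ->
    hkq_compact G alpha [set O | hkq G alpha O /\ K (Phi O)].

End HyperKahlerDefs.

(* Main.v *)
Require Import Defs.
From HB Require Import structures.
From mathcomp Require Import all_boot all_order all_algebra.
From mathcomp Require Import all_classical all_reals all_analysis.
From mathcomp Require Import complex.
From mathcomp Require Import ring lra finmap.
Set Implicit Arguments. Unset Strict Implicit. Unset Printing Implicit Defensive.
Import Order.TTheory GRing.Theory Num.Theory.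
Import numFieldTopology.Exports numFieldNormedType.Exports.
Local Open Scope classical_set_scope.
Local Open Scope ring_scope.
Local Open Scope complex_scope.
Section S.
Variable R : realType.
Local Notation C := (Cplx R).

Lemma conj_cont : continuous (fun x : C => Num.conj x).
Proof.
move=> x. 
apply/(@cvgrPdist_lt _ C _ (nbhs x) _).
move=> e e0.
have H := @cvgr_dist_lt _ _ _ (nbhs x) _ id x cvg_id e e0.
near=> y. rewrite -rmorphB norm_conjC. near: y. exact: H.
Unshelve. all: by end_near. Qed.

Lemma ReB (x y : C) : complex.Re (x - y) = complex.Re x - complex.Re y.
Proof. by case: x; case: y. Qed.
Lemma ReD (x y : C) : complex.Re (x + y) = complex.Re x + complex.Re y.
Proof. by case: x; case: y. Qed.

Lemma Re_cont : continuous (fun x : C => complex.Re x : R).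
Proof.
move=> x; apply/(@cvgrPdist_lt _ R _ (nbhs x) _) => e e0.
have H := @cvgr_dist_lt _ _ _ (nbhs x) _ id x cvg_id e%:C.
near=> y.
rewrite -ltcR; apply: le_lt_trans (_ : `|x - y| < e%:C); last first.
  near: y; apply: H. by rewrite ltcR.
rewrite -ReB; exact: normc_ge_Re.
Unshelve. all: by end_near. Qed.

End S.
Section S3.
Variable R : realType.
Local Notation C := (Cplx R).

Lemma normC_real (x : R) : `|(x%:C : C)| = (`|x|)%:C.
Proof. by rewrite normc_def /= expr0n addr0 sqrtr_sqr. Qed.

Lemma realC_cont : continuous (fun a : R => (a%:C : C)).
Proof.
move=> a; apply/(@cvgrPdist_lt _ C _ (nbhs a) _) => e.
case: e => er ei; rewrite ltcE /= => /andP[/eqP ei0 er0]; subst ei.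
have H := @cvgr_dist_lt _ _ _ (nbhs a) _ id a cvg_id er er0.
near=> t.
rewrite -rmorphB normC_real -complexr0 ltcR.
near: t; exact: H.
Unshelve. all: by end_near. Qed.

Definition toC (ab : R * R) : C := ab.1%:C + 'i * ab.2%:C.

Lemma toC_cont : continuous toC.
Proof.
move=> ab; rewrite /toC.
apply: cvgD.
  have h1 := (@continuous_cvg _ _ _ (nbhs ab) _ fst (fun a : R => (a%:C : C)) ab.1 (@realC_cont ab.1) cvg_fst).
  exact: h1.
apply: cvgM; first exact: cvg_cst.
exact: (@continuous_cvg _ _ _ (nbhs ab) _ snd (fun a : R => (a%:C : C)) ab.2 (@realC_cont ab.2) cvg_snd).
Qed.

Definition Sq (r : R) : set C := toC @` (`[-r, r] `*` `[-r, r]).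

Lemma Sq_compact r : compact (Sq r).
Proof.
apply: continuous_compact; first exact: continuous_subspaceT toC_cont.
by apply: compact_setX; exact: segment_compact.
Qed.

Lemma Sq_in r (x : C) : -r <= complex.Re x <= r -> -r <= complex.Im x <= r -> Sq r x.
Proof.
move=> h1 h2; exists (complex.Re x, complex.Im x).
  by split; rewrite /= in_itv /=.
by case: x {h1 h2} => a b; rewrite /toC /= ; simpc.
Qed.

End S3.
Section S4.
Variable R : realType.
Local Notation C := (Cplx R).

Definition ecvg {T : Type} (F : set_system T) m k (f : T -> 'M[C]_(m,k)) (a : 'M[C]_(m,k)) :=
  forall i j, (fun t => f t i j) @ F --> a i j.

Lemma ecvg_mul {T : Type} (F : set_system T) {FF : Filter F} m k l
  (f : T -> 'M[C]_(m,k)) (g : T -> 'M[C]_(k,l)) a b :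
  ecvg F f a -> ecvg F g b -> ecvg F (fun t => f t *m g t) (a *m b).
Proof.
move=> hf hg i j.
have -> : (fun t => (f t *m g t) i j) = (fun t => \sum_q f t i q * g t q j).
  by apply/funext => t; rewrite mxE.
rewrite mxE; apply: cvg_big => //; first exact: add_continuous.
by move=> q _; apply: cvgM; [exact: hf | exact: hg].
Qed.

Lemma ecvg_adj {T : Type} (F : set_system T) {FF : Filter F} m k
  (f : T -> 'M[C]_(m,k)) a :
  ecvg F f a -> ecvg F (fun t => adjmx (f t)) (adjmx a).
Proof.
move=> hf i j.
have -> : (fun t => adjmx (f t) i j) = (fun t => Num.conj (f t j i)).
  by apply/funext => t; rewrite !mxE.
rewrite !mxE.
exact: (@continuous_cvg _ _ _ F _ (fun t => f t j i) (fun x : C => Num.conj x) (a j i) (@conj_cont R (a j i)) (hf j i)).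
Qed.

Lemma ecvg_cst {T : Type} (F : set_system T) {FF : Filter F} m k (a : 'M[C]_(m,k)) :
  ecvg F (fun _ => a) a.
Proof. by move=> i j; exact: cvg_cst. Qed.

Lemma ecvg_fst m k m' k' (p0 : 'M[C]_(m,k) * 'M[C]_(m',k')) :
  ecvg (nbhs p0) fst p0.1.
Proof.
move=> i j.
exact: (@continuous_cvg _ _ _ (nbhs p0) _ fst (fun M : 'M[C]_(m,k) => M i j) p0.1 (@coord_continuous C m k i j p0.1) cvg_fst).
Qed.

Lemma ecvg_snd m k m' k' (p0 : 'M[C]_(m,k) * 'M[C]_(m',k')) :
  ecvg (nbhs p0) snd p0.2.
Proof.
move=> i j.
exact: (@continuous_cvg _ _ _ (nbhs p0) _ snd (fun M : 'M[C]_(m',k') => M i j) p0.2 (@coord_continuous C m' k' i j p0.2) cvg_snd).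
Qed.

Lemma ecvg_id m k (a : 'M[C]_(m,k)) : ecvg (nbhs a) id a.
Proof. by move=> i j; exact: (@coord_continuous C m k i j a). Qed.

Lemma Re_cvg {T : Type} (F : set_system T) {FF : Filter F} (f : T -> C) (a : C) :
  f @ F --> a -> (fun t => complex.Re (f t) : R) @ F --> complex.Re a.
Proof.
move=> h.
exact: (@continuous_cvg _ _ _ F _ f (fun x : C => complex.Re x : R) a (@Re_cont R a) h).
Qed.

Lemma mom_cvg n {T : Type} (F : set_system T) {FF : Filter F} (f : T -> 'cV[C]_n) z X :
  ecvg F f z -> (fun t => mom (f t) X) @ F --> mom z X.
Proof.
move=> h; rewrite /mom; apply: Re_cvg; apply: cvgM; first exact: cvg_cst.
apply: ecvg_mul; last exact: h.
apply: ecvg_mul; [exact: ecvg_adj | exact: ecvg_cst].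
Qed.

End S4.
Section S5.
Variable R : realType.
Local Notation C := (Cplx R).

Lemma adjmx_mul m k l (A : 'M[C]_(m,k)) (B : 'M[C]_(k,l)) :
  adjmx (A *m B) = adjmx B *m adjmx A.
Proof.
apply/matrixP => i j; rewrite !mxE rmorph_sum; apply: eq_bigr => q _.
by rewrite !mxE rmorphM mulrC.
Qed.

Lemma adjmxK m k (A : 'M[C]_(m,k)) : adjmx (adjmx A) = A.
Proof. by apply/matrixP => i j; rewrite !mxE conjCK. Qed.

Lemma Re0 : complex.Re (0 : C) = 0. Proof. by []. Qed.

Lemma sqnormE n (w : 'rV[C]_n) :
  sqnorm_cov w = \sum_j (complex.Re (w 0 j) ^+ 2 + complex.Im (w 0 j) ^+ 2).
Proof.
rewrite /sqnorm_cov mxE.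
rewrite (big_morph (fun x : C => complex.Re x) (@ReD R) Re0).
apply: eq_bigr => j _; rewrite !mxE.
case: (w 0 j) => a b /=; ring.
Qed.

Lemma unitary_inv n (g : 'M[C]_n) : unitary_mx g -> invmx g = adjmx g.
Proof.
rewrite /unitary_mx => h.
have [_ gu] := mulmx1_unit h.
by rewrite -[LHS]mul1mx -h -mulmxA mulmxV // mulmx1.
Qed.

Lemma sqnorm_unitary n (w : 'rV[C]_n) g : unitary_mx g ->
  sqnorm_cov (w *m invmx g) = sqnorm_cov w.
Proof.
move=> u; rewrite unitary_inv // /sqnorm_cov adjmx_mul adjmxK.
by rewrite -mulmxA (mulmxA (adjmx g)) u mul1mx.
Qed.

Lemma bounded_K (K : set R) : compact K -> exists M : R, 0 <= M /\ forall x, K x -> `|x| <= M.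
Proof.
move=> /compact_bounded [M [Mr HM]].
exists (`|M| + 1); split; first by rewrite addr_ge0.
apply: HM; apply: (le_lt_trans (real_ler_norm Mr)); by rewrite ltrDl.
Qed.
End S5.
Section S6.
Variables (R : realType) (n : nat) (G : set 'M[Cplx R]_n) (alpha : 'M[Cplx R]_n -> R).
Local Notation C := (Cplx R).
Local Notation Vec := ('cV[C]_n).
Local Notation Cov := ('rV[C]_n).

Lemma closed1 (T : topologicalType) (x : T) : hausdorff_space T -> closed [set x].
Proof. by move=> h; apply: compact_closed => //; exact: compact_set1. Qed.

Lemma level_closed : closed (level G alpha).
Proof.
have -> : level G alpha =
  (\bigcap_(X in lie_alg G) [set p : Vec * Cov | momR p X = alpha X]) `&`
  (\bigcap_(X in lie_alg G) [set p : Vec * Cov | momC p X = 0]).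
  apply/seteqP; split => p /=.
    by move=> [h1 h2]; split => X hX; [exact: h1 | exact: h2].
  by move=> [h1 h2]; split => X hX; [exact: h1 | exact: h2].
apply: closedI; apply: closed_bigI => X _.
  have -> : [set p : Vec * Cov | momR p X = alpha X] =
     (fun p : Vec * Cov => momR p X) @^-1` [set alpha X] by [].
  apply: preimage_closed; last exact: closed1 (@norm_hausdorff _ R).
  move=> p _; rewrite /momR; apply: cvgB.
    exact: (mom_cvg (X := X) (ecvg_fst (p0 := p))).
  exact: (mom_cvg (X := X) (ecvg_adj (ecvg_snd (p0 := p)))).
have -> : [set p : Vec * Cov | momC p X = 0] =
   (fun p : Vec * Cov => momC p X) @^-1` [set 0] by [].
apply: preimage_closed; last exact: closed1 (@norm_hausdorff _ C).
move=> p _; rewrite /momC.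
have H := (ecvg_mul (ecvg_snd (p0 := p)) (ecvg_mul (ecvg_cst (a := X)) (ecvg_fst (p0 := p)))). exact: H.
Qed.

Definition Pset (K : set R) := [set p : Vec * Cov | level G alpha p /\ K (sqnorm_cov p.2 / 2%:R)].

Lemma Pset_closed K : compact K -> closed (Pset K).
Proof.
move=> Kc.
have -> : Pset K = level G alpha `&` (fun p : Vec * Cov => sqnorm_cov p.2 / 2%:R) @^-1` K by [].
apply: closedI; first exact: level_closed.
apply: preimage_closed; last by apply: compact_closed => //; exact: norm_hausdorff.
move=> p _; apply: cvgM; last exact: cvg_cst.
rewrite /sqnorm_cov; apply: Re_cvg.
have H := (ecvg_mul (ecvg_snd (p0 := p)) (ecvg_adj (ecvg_snd (p0 := p)))). exact: H.
Qed.

End S6.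
Section S7.
Variables (R : realType) (n : nat) (G : set 'M[Cplx R]_n) (alpha : 'M[Cplx R]_n -> R).
Local Notation C := (Cplx R).
Local Notation Vec := ('cV[C]_n).
Local Notation Cov := ('rV[C]_n).

Definition Box (r : R) : set Cov := [set v | forall i, Sq r (v ord0 i)].

Lemma Box_compact r : compact (Box r).
Proof. exact: (@rV_compact C n (fun=> Sq r) (fun=> Sq_compact (r:=r))). Qed.

Lemma sq_bound (x M : R) : 0 <= M -> x ^+ 2 <= 2 * M -> - (2 * M + 1) <= x <= 2 * M + 1.
Proof. move=> M0 h; apply/andP; split; nra. Qed.

Lemma in_Box (w : Cov) M : 0 <= M -> sqnorm_cov w <= 2 * M -> Box (2 * M + 1) w.
Proof.
move=> M0 h i.
have hs : 0 <= \sum_(j < n | j != i) (complex.Re (w 0 j) ^+ 2 + complex.Im (w 0 j) ^+ 2).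
  by apply: sumr_ge0 => j _; rewrite addr_ge0 ?sqr_ge0.
have e : sqnorm_cov w = complex.Re (w 0 i) ^+ 2 + complex.Im (w 0 i) ^+ 2 +
  \sum_(j < n | j != i) (complex.Re (w 0 j) ^+ 2 + complex.Im (w 0 j) ^+ 2).
  by rewrite sqnormE (bigD1 i).
have h1 := sqr_ge0 (complex.Re (w 0 i)).
have h2 := sqr_ge0 (complex.Im (w 0 i)).
rewrite e in h.
apply: Sq_in; apply: sq_bound => //; rewrite -[ord0]/(0 : 'I_1); lra.
Qed.

Definition Phw (w : Cov) : {ptws lie_type G -> R} :=
  fun X => alpha (sval X) + mom (adjmx w) (sval X).

Lemma Phw_cont : continuous Phw.
Proof.
move=> w.
apply/(@pointwise_cvgP (discrete_topology {classic (lie_type G)}) R (Phw @ w) (Phw w) (fmap_filter Phw (nbhs_filter w))) => X.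
change ((fun w' : Cov => alpha (sval X) + mom (adjmx w') (sval X)) @ w --> (alpha (sval X) + mom (adjmx w) (sval X) : R)).
apply: (cvgD (FF := nbhs_filter w)); first exact: cvg_cst.
have H := mom_cvg (X := sval X) (ecvg_adj (ecvg_id (a := w))).
exact: H.
Qed.

End S7.
HB.instance Definition _ (R : realType) (n : nat) := Pointed.on ('cV[Cplx R]_n * 'rV[Cplx R]_n)%type.
Section S9.
Variables (R : realType) (n : nat) (G : set 'M[Cplx R]_n) (alpha : 'M[Cplx R]_n -> R).
Local Notation C := (Cplx R).
Local Notation Vec := ('cV[C]_n).
Local Notation Cov := ('rV[C]_n).

Lemma Pset_compact K : mom_proper G -> compact K -> compact (Pset G alpha K).
Proof.
move=> mp Kc.
have [M [M0 HM]] := bounded_K Kc.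
pose r := 2 * (2 * M) + 1.
pose Kmu := (@Phw R n G alpha) @` Box r.
have Kmuc : compact Kmu.
  apply: continuous_compact; last exact: Box_compact.
  exact: continuous_subspaceT (@Phw_cont R n G alpha).
have Zc := mp Kmu Kmuc.
have Pcl := Pset_closed (G := G) (alpha := alpha) Kc.
have BZ := compact_setX Zc (Box_compact (r := r)).
apply: (subclosed_compact Pcl (BZ n)).
move=> p [lv Kp].
have hb : Box r p.2.
  apply: in_Box; first by rewrite mulr_ge0.
  have := HM _ Kp; rewrite ler_norml => /andP[_ h]; lra.
split => //=.
exists p.2 => //.
apply/funext => X; rewrite /Phw /mom_g.
have := (lv.1 (sval X) (svalP X)); rewrite /momR /= => <-.
by rewrite subrK.
Qed.

Lemma Phi_orbit p : compact_unitary_group G -> Phi (Defs.orbit G p) = sqnorm_cov p.2 / 2%:R.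
Proof.
case=> G1 _ _ Gu _.
have : Defs.orbit G p (xget (0, 0) (Defs.orbit G p)).
  by apply: xgetPex; exists (act 1%:M p); exists 1%:M.
case=> g Gg e.
by rewrite /Phi -e /act /= sqnorm_unitary //; exact: Gu.
Qed.

End S9.

Theorem mainTheorem2 (R : realType) (n : nat) (G : set 'M[Cplx R]_n)
  (alpha : 'M[Cplx R]_n -> R) :
  compact_unitary_group G ->
  lie_dual G alpha ->
  central G alpha ->
  mom_proper G ->
  Phi_proper G alpha.
Proof.
move=> cG _ _ mp K Kc; split; first by move=> O [].
move=> I F Fo Scov.
have [V hV] := choice (fun i => (Fo i).2).
have Pc := Pset_compact (G := G) (alpha := alpha) mp Kc.
rewrite (compact_cover ('cV[Cplx R]_n * 'rV[Cplx R]_n)%type) in Pc.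
have cov : Pset G alpha K `<=` cover (setT : set {classic I}) V.
  move=> p [lv Kp].
  have SO : [set O | hkq G alpha O /\ K (Phi O)] (Defs.orbit G p).
    by split; [exists p | rewrite (Phi_orbit p cG)].
  have [i _ Fi] := Scov _ SO.
  exists i => //.
  have : [set p | level G alpha p /\ F i (Defs.orbit G p)] p by [].
  by rewrite (hV i).2 => -[].
have [D _ HD] := Pc {classic I} setT V (fun i _ => (hV i).1) cov.
exists ([set` D] : set {classic I}); first by have fD := finite_fset D; exact fD.
move=> O [[p lv ->] KO].
have Pp : Pset G alpha K p by split => //; rewrite -(Phi_orbit p cG).
have [i Di Vi] := HD p Pp.
exists i => //.
have : (V i `&` level G alpha) p by [].
by rewrite -(hV i).2 => -[].
Qed.
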